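(* Let $\psi_0=1$, $\psi_j(x)=\sqrt2\cos(\pi jx)$ for $j\ge1$, let $\gamma>1/2$, $C>0$, and let $X$ have density $p=1+\sum_{j\ge1}\beta_j\psi_j\in\mathcal P(\gamma,C)$ on $[0,1]$. For $k\ge1$ let $m_k=\lfloor k^{1/(2\gamma+1)}\rfloor$, let $\Sigma_k$ be the covariance matrix of the random vector $(\psi_1(X),\dots,\psi_{m_k}(X))^T$, and let $\lambda_k$ be the largest eigenvalue of $\Sigma_k$. Then $\limsup_{k\to\infty}\lambda_k<\infty$.
   Context: Sobolev class: for $\gamma>1/2$, $C>0$, $\mathcal B(\gamma,C)=\{\beta=(\beta_1,\beta_2,\dots):\sum_{j\ge1}\beta_j^2j^{2\gamma}\le C^2\}$ and $\mathcal P(\gamma,C)=\{p=1+\sum_{j\ge1}\beta_j\psi_j:\beta\in\mathcal B(\gamma,C)\}$ (densities on $[0,1]$). *)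

(* Defs.v *)
From Stdlib Require Import Reals Lra Lia ZArith ClassicalEpsilon.
Open Scope R_scope.

Fixpoint sumR (n : nat) (f : nat -> R) : R :=
  match n with O => 0 | S n' => sumR n' f + f n' end.

Definition psi (j : nat) (x : R) : R :=
  match j with O => 1 | _ => sqrt 2 * cos (PI * INR j * x) end.

(* Riemann integral over [0,1] (0 if not Riemann integrable; the value does
   not depend on the chosen integrability witness) *)
Definition Int01 (f : R -> R) : R :=
  match excluded_middle_informative (exists pr : Riemann_integrable f 0 1, True) with
  | left h => RiemannInt (proj1_sig (constructive_indefinite_description _ h))
  | right _ => 0
  end.

Definition Expect (p : R -> R) (g : R -> R) : R := Int01 (fun x => g x * p x).

(* covariance matrix of (psi_1(X), ..., psi_m(X)); indices i, j < m,
   entry (i,j) = Cov(psi_{i+1}(X), psi_{j+1}(X)) *)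
Definition covmat (p : R -> R) (i j : nat) : R :=
  Expect p (fun x => psi (S i) x * psi (S j) x)
  - Expect p (psi (S i)) * Expect p (psi (S j)).

Definition is_eigenvalue (m : nat) (A : nat -> nat -> R) (lam : R) : Prop :=
  exists v : nat -> R,
    (exists i, (i < m)%nat /\ v i <> 0) /\
    forall i, (i < m)%nat -> sumR m (fun j => A i j * v j) = lam * v i.

Definition is_largest_eigenvalue (m : nat) (A : nat -> nat -> R) (lam : R) : Prop :=
  is_eigenvalue m A lam /\ forall mu, is_eigenvalue m A mu -> mu <= lam.

Definition mk (gamma : R) (k : nat) : nat :=
  Z.to_nat (Int_part (Rpower (INR k) (1 / (2 * gamma + 1)))).

(* Main.v *)
Require Import Defs.
From Stdlib Require Import Reals Lra Lia ClassicalEpsilon FunctionalExtensionality.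
Open Scope R_scope.

Lemma sumR_ext n f g : (forall i, (i < n)%nat -> f i = g i) -> sumR n f = sumR n g.
Proof. induction n; simpl; intros H; auto. rewrite IHn by (intros; apply H; lia). rewrite H by lia. auto. Qed.

Lemma sumR_le n f g : (forall i, (i < n)%nat -> f i <= g i) -> sumR n f <= sumR n g.
Proof. induction n; simpl; intros H; [lra|]. assert (f n <= g n) by (apply H; lia).
  assert (sumR n f <= sumR n g) by (apply IHn; intros; apply H; lia). lra. Qed.

Lemma sumR_plus n f g : sumR n (fun i => f i + g i) = sumR n f + sumR n g.
Proof. induction n; simpl; [lra|]. rewrite IHn. lra. Qed.

Lemma sumR_scal n c f : sumR n (fun i => c * f i) = c * sumR n f.
Proof. induction n; simpl; [lra|]. rewrite IHn. lra. Qed.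

Lemma sumR_minus n f g : sumR n (fun i => f i - g i) = sumR n f - sumR n g.
Proof. induction n; simpl; [lra|]. rewrite IHn. lra. Qed.

Lemma sumR_nonneg n f : (forall i, (i < n)%nat -> 0 <= f i) -> 0 <= sumR n f.
Proof. intros H. replace 0 with (sumR n (fun _ => 0)). apply sumR_le; auto.
  clear H; induction n; simpl; auto; lra. Qed.

Lemma sumR_delta n v i : (i < n)%nat ->
  sumR n (fun j => v j * (if Nat.eqb i j then 1 else 0)) = v i.
Proof. induction n; intros H; simpl; [lia|].
  destruct (Nat.eq_dec i n) as [->|Hn].
  - rewrite Nat.eqb_refl. rewrite (sumR_ext n _ (fun _ => 0)).
    + replace (sumR n (fun _ => 0)) with 0. lra. clear; induction n; simpl; auto; lra.
    + intros j Hj. replace (Nat.eqb n j) with false. lra. symmetry; apply Nat.eqb_neq; lia.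
  - replace (Nat.eqb i n) with false by (symmetry; apply Nat.eqb_neq; auto).
    rewrite IHn by lia. lra. Qed.

Lemma sumR_pos n v i : (i < n)%nat -> v i <> 0 -> 0 < sumR n (fun j => v j * v j).
Proof. induction n; intros H Hv; simpl; [lia|].
  assert (0 <= sumR n (fun j => v j * v j)) by (apply sumR_nonneg; intros; nra).
  destruct (Nat.eq_dec i n) as [->|Hn].
  - assert (0 < v n * v n) by nra. lra.
  - assert (0 < sumR n (fun j => v j * v j)) by (apply IHn; auto; lia). nra. Qed.

Lemma Int01_pr f (pr : Riemann_integrable f 0 1) : Int01 f = RiemannInt pr.
Proof. unfold Int01. destruct excluded_middle_informative as [h|h].
  - apply RiemannInt_P5.
  - exfalso. apply h. exists pr. auto. Qed.

Lemma cont_int f : continuity f -> Riemann_integrable f 0 1.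
Proof. intros H. apply continuity_implies_RiemannInt; [lra|]. intros; apply H. Qed.

Lemma Int01_lin f g l : continuity f -> continuity g ->
  Int01 (fun x => f x + l * g x) = Int01 f + l * Int01 g.
Proof. intros Hf Hg.
  assert (Hc : continuity (fun x => f x + l * g x)).
  { apply continuity_plus; auto. apply continuity_scal; auto. }
  rewrite (Int01_pr _ (cont_int _ Hc)), (Int01_pr _ (cont_int _ Hf)), (Int01_pr _ (cont_int _ Hg)).
  apply RiemannInt_P13. Qed.

Lemma Int01_le f g : continuity f -> continuity g ->
  (forall x, 0 <= x <= 1 -> f x <= g x) -> Int01 f <= Int01 g.
Proof. intros Hf Hg H.
  rewrite (Int01_pr _ (cont_int _ Hf)), (Int01_pr _ (cont_int _ Hg)).
  apply RiemannInt_P19; [lra|]. intros; apply H; lra. Qed.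

Lemma Int01_zero : Int01 (fun _ => 0) = 0.
Proof. assert (Hc : continuity (fct_cte 0)) by (apply continuity_const; intros x y; auto).
  change (Int01 (fct_cte 0) = 0). rewrite (Int01_pr _ (cont_int _ Hc)). rewrite RiemannInt_P15. lra. Qed.

Lemma RI_ext f g a b : a <= b -> Riemann_integrable f a b ->
  (forall x, a <= x <= b -> f x = g x) -> Riemann_integrable g a b.
Proof. intros Hab pr H eps. destruct (pr eps) as [phi [psi [H1 H2]]].
  exists phi, psi. split; auto. intros t Ht. rewrite Rmin_left, Rmax_right in Ht by auto. rewrite <- (H t Ht). apply H1. rewrite Rmin_left, Rmax_right by auto; auto.
  Qed.

Lemma Int01_ext f g : (forall x, 0 <= x <= 1 -> f x = g x) -> Int01 f = Int01 g.
Proof. intros H.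
  destruct (excluded_middle_informative (exists pr : Riemann_integrable f 0 1, True)) as [[pr _]|h].
  - rewrite (Int01_pr f pr), (Int01_pr g (RI_ext f g 0 1 ltac:(lra) pr H)).
    apply RiemannInt_P18; [lra|]. intros; apply H; lra.
  - unfold Int01. destruct excluded_middle_informative as [h1|h1]; [contradiction|].
    destruct excluded_middle_informative as [h'|h']; auto.
    exfalso. apply h. destruct h' as [pr _]. exists (RI_ext g f 0 1 ltac:(lra) pr ltac:(intros; symmetry; auto)). auto. Qed.

Lemma Int01_sum n (c : nat -> R) (f : nat -> R -> R) :
  (forall i, continuity (f i)) ->
  Int01 (fun x => sumR n (fun i => c i * f i x)) = sumR n (fun i => c i * Int01 (f i)).
Proof. intros Hf. induction n; simpl.
  - apply Int01_zero.
  - rewrite <- IHn. apply (Int01_lin (fun x => sumR n (fun i => c i * f i x)) (f n) (c n)); auto.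
    clear IHn. induction n; simpl.
    + apply continuity_const. intros x y; auto.
    + apply continuity_plus; auto. apply continuity_scal; auto. Qed.

Lemma cont_sum n (f : nat -> R -> R) (c : nat -> R) : (forall i, continuity (f i)) ->
  continuity (fun x => sumR n (fun i => c i * f i x)).
Proof. intros Hf. induction n; simpl.
  + apply continuity_const. intros x y; auto.
  + apply continuity_plus; auto. apply continuity_scal; auto. Qed.

Lemma Int01_scal f l : continuity f -> Int01 (fun x => l * f x) = l * Int01 f.
Proof. intros Hf.
  assert (Hc : continuity (fun _:R => 0)) by (apply continuity_const; intros x y; auto).
  pose proof (Int01_lin (fun _ => 0) f l Hc Hf) as E. rewrite Int01_zero in E.
  rewrite <- (Rplus_0_l (l * Int01 f)), <- E. apply Int01_ext. intros; lra. Qed.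

Lemma FTC01 (F f : R -> R) : (forall x, derivable_pt_lim F x (f x)) -> continuity f ->
  Int01 f = F 1 - F 0.
Proof. intros HF Hf.
  pose (d := (fun x => exist _ (f x) (HF x)) : derivable F).
  assert (E : derive F d = f) by reflexivity.
  assert (Hd : continuity (derive F d)) by (rewrite E; exact Hf).
  pose (G := @mkC1 F d Hd).
  pose proof (@RiemannInt_P33 G 0 1 (RiemannInt_P32 G 0 1) ltac:(lra)) as H.
  rewrite <- (Int01_pr _ (RiemannInt_P32 G 0 1)) in H. exact H. Qed.

Lemma cont_cos_lin c : continuity (fun x => cos (c * x)).
Proof. intros x. apply continuity_pt_comp with (f1 := fun x => c * x).
  - apply continuity_pt_scal. apply derivable_continuous_pt, derivable_pt_id.
  - apply continuity_cos. Qed.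

Lemma Icos (z : Z) : Int01 (fun x => cos (PI * IZR z * x)) = if Z.eqb z 0 then 1 else 0.
Proof. destruct (Z.eqb_spec z 0) as [->|Hz].
  - rewrite (Int01_ext _ (fun _ => 1)). 2:{ intros; rewrite Rmult_0_r, Rmult_0_l; apply cos_0. }
    rewrite (FTC01 (fun x => x) (fun _ => 1)). lra. intros; apply derivable_pt_lim_id.
    apply continuity_const; intros x y; auto.
  - set (c := PI * IZR z).
    assert (Hc : c <> 0). { unfold c. apply Rmult_integral_contrapositive. split.
      - pose proof PI_RGT_0; lra. - apply not_0_IZR; auto. }
    rewrite (FTC01 (fun x => / c * sin (c * x)) (fun x => cos (c * x))).
    + rewrite Rmult_1_r, Rmult_0_r, sin_0. unfold c.
      rewrite sin_eq_0_1. lra. exists z. ring.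
    + intros x. replace (cos (c * x)) with (/ c * (cos (c * x) * c)) by (field; auto).
      apply derivable_pt_lim_scal.
      apply (derivable_pt_lim_comp (fun x => c * x) sin).
      * pose proof (derivable_pt_lim_scal id c x 1 (derivable_pt_lim_id x)) as K; rewrite Rmult_1_r in K; exact K.
      * apply derivable_pt_lim_sin.
    + apply cont_cos_lin. Qed.

Lemma cont_psi j : continuity (psi j).
Proof. destruct j; simpl.
  - apply continuity_const; intros x y; auto.
  - apply continuity_scal. intros x.
    replace (fun x => cos (PI * match j with 0%nat => 1 | S _ => INR j + 1 end * x))
      with (fun x => cos ((PI * match j with 0%nat => 1 | S _ => INR j + 1 end) * x))
      by (apply functional_extensionality; intros; rewrite Rmult_assoc; auto).
    apply cont_cos_lin. Qed.

Lemma psi_bound j x : Rabs (psi (S j) x) <= sqrt 2.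
Proof. unfold psi. rewrite Rabs_mult, Rabs_right by (apply Rle_ge, sqrt_pos).
  pose proof (COS_bound (PI * INR (S j) * x)). pose proof (sqrt_pos 2).
  assert (Rabs (cos (PI * INR (S j) * x)) <= 1) by (apply Rabs_le; lra). nra. Qed.

Lemma orth i j : Int01 (fun x => psi (S i) x * psi (S j) x) = if Nat.eqb i j then 1 else 0.
Proof.
  set (zi := Z.of_nat (S i)). set (zj := Z.of_nat (S j)).
  rewrite (Int01_ext _ (fun x => cos (PI * IZR (zi - zj) * x) + 1 * cos (PI * IZR (zi + zj) * x))).
  - rewrite Int01_lin by apply cont_cos_lin. rewrite !Icos.
    destruct (Nat.eqb_spec i j) as [->|Hij].
    + replace (zi - zj)%Z with 0%Z by (unfold zi, zj; lia).
      replace (Z.eqb (zi + zj) 0) with false by (symmetry; apply Z.eqb_neq; unfold zi, zj; lia). simpl. lra.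
    + replace (Z.eqb (zi - zj) 0) with false by (symmetry; apply Z.eqb_neq; unfold zi, zj; lia).
      replace (Z.eqb (zi + zj) 0) with false by (symmetry; apply Z.eqb_neq; unfold zi, zj; lia). lra.
  - intros x _. unfold psi. rewrite minus_IZR, plus_IZR. unfold zi, zj. rewrite <- !INR_IZR_INZ.
    replace (PI * (INR (S i) - INR (S j)) * x) with (PI * INR (S i) * x - PI * INR (S j) * x) by ring.
    replace (PI * (INR (S i) + INR (S j)) * x) with (PI * INR (S i) * x + PI * INR (S j) * x) by ring.
    rewrite cos_minus, cos_plus.
    replace (sqrt 2 * cos (PI * INR (S i) * x) * (sqrt 2 * cos (PI * INR (S j) * x)))
      with ((sqrt 2 * sqrt 2) * (cos (PI * INR (S i) * x) * cos (PI * INR (S j) * x))) by ring.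
    rewrite sqrt_sqrt by lra. ring. Qed.

Lemma Rpower_pos x y : 0 < Rpower x y.
Proof. unfold Rpower. apply exp_pos. Qed.

Lemma Rpower_1_base y : Rpower 1 y = 1.
Proof. unfold Rpower. rewrite ln_1, Rmult_0_r. apply exp_0. Qed.

Lemma zeta_step s x : 1 < s -> 1 <= x ->
  Rpower (x + 1) (- s) <= (Rpower x (1 - s) - Rpower (x + 1) (1 - s)) / (s - 1).
Proof. intros Hs Hx.
  destruct (MVT_cor2 (fun y => Rpower y (1 - s)) (fun y => (1 - s) * Rpower y (1 - s - 1)) x (x + 1))
    as [c [Hc1 Hc2]]; [lra| |].
  - intros c Hc. apply derivable_pt_lim_power. lra.
  - replace (1 - s - 1) with (- s) in Hc1 by ring.
    replace (Rpower x (1 - s) - Rpower (x + 1) (1 - s)) with ((s - 1) * Rpower c (- s))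
      by (replace (x + 1 - x) with 1 in Hc1 by ring; lra).
    replace ((s - 1) * Rpower c (- s) / (s - 1)) with (Rpower c (- s)) by (field; lra).
    rewrite !Rpower_Ropp. apply Rinv_le_contravar. apply Rpower_pos.
    apply Rle_Rpower_l; lra. Qed.

Lemma zeta_bound s n : 1 < s ->
  sumR n (fun j => Rpower (INR (S j)) (- s)) <= 1 + / (s - 1).
Proof. intros Hs.
  assert (Hinv : 0 < / (s - 1)) by (apply Rinv_0_lt_compat; lra).
  assert (H : forall n, sumR (S n) (fun j => Rpower (INR (S j)) (- s))
             <= 1 + (1 - Rpower (INR (S n)) (1 - s)) / (s - 1)).
  { induction n0.
    - simpl. rewrite Rplus_0_l, Rpower_1_base, Rpower_1_base. unfold Rdiv. lra.
    - change (sumR (S (S n0)) (fun j => Rpower (INR (S j)) (- s))) with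
        (sumR (S n0) (fun j => Rpower (INR (S j)) (- s)) + Rpower (INR (S (S n0))) (- s)).
      pose proof (zeta_step s (INR (S n0)) Hs) as K.
      rewrite <- S_INR in K. assert (1 <= INR (S n0)) by (rewrite S_INR; pose proof (pos_INR n0); lra).
      specialize (K H). unfold Rdiv in *. nra. }
  destruct n.
  - simpl. lra.
  - specialize (H n). pose proof (Rpower_pos (INR (S n)) (1 - s)).
    assert ((1 - Rpower (INR (S n)) (1 - s)) / (s - 1) <= / (s - 1)).
    { unfold Rdiv. rewrite <- (Rmult_1_l (/ (s - 1))) at 2. apply Rmult_le_compat_r; lra. }
    lra. Qed.

Lemma amgm b a : 0 < a -> Rabs b <= (b ^ 2 * a + / a) / 2.
Proof. intros Ha. set (t := Rabs b). assert (b ^ 2 = t * t) by (unfold t; rewrite <- pow2_abs; ring).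
  rewrite H. assert (0 <= (a * t - 1) * (a * t - 1) / a).
  { unfold Rdiv. apply Rmult_le_pos. apply Rle_0_sqr. left; apply Rinv_0_lt_compat; auto. }
  replace ((a * t - 1) * (a * t - 1) / a) with (t * t * a + / a - 2 * t) in H0 by (field; lra).
  lra. Qed.

Lemma beta_abs_bound gamma C beta : 1/2 < gamma ->
  (forall n : nat, sumR n (fun j => (beta (S j))^2 * Rpower (INR (S j)) (2 * gamma)) <= C^2) ->
  forall n, sumR n (fun j => Rabs (beta (S j))) <= (C ^ 2 + (1 + / (2 * gamma - 1))) / 2.
Proof. intros Hg Hs n.
  eapply Rle_trans.
  - apply (sumR_le n _ (fun j => ((beta (S j))^2 * Rpower (INR (S j)) (2 * gamma)
            + Rpower (INR (S j)) (- (2 * gamma))) / 2)).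
    intros i _. rewrite Rpower_Ropp. apply amgm, Rpower_pos.
  - unfold Rdiv. rewrite (sumR_ext n _ (fun j => / 2 * ((beta (S j))^2 * Rpower (INR (S j)) (2 * gamma)
            + Rpower (INR (S j)) (- (2 * gamma))))) by (intros; ring).
    rewrite sumR_scal, sumR_plus.
    pose proof (Hs n). pose proof (zeta_bound (2 * gamma) n ltac:(lra)). lra. Qed.

Definition Sn (beta : nat -> R) n x := 1 + sumR n (fun j => beta (S j) * psi (S j) x).
Definition Tn (beta : nat -> R) n := sumR n (fun j => Rabs (beta (S j))).

Lemma sumR_S n f : sumR (S n) f = sumR n f + f n.
Proof. reflexivity. Qed.

Lemma T_growing beta : Un_growing (Tn beta).
Proof. intros n. unfold Tn; simpl. pose proof (Rabs_pos (beta (S n))). lra. Qed.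

Lemma T_mono beta a d : Tn beta a <= Tn beta (a + d).
Proof. induction d. rewrite Nat.add_0_r; lra. rewrite Nat.add_succ_r.
  pose proof (T_growing beta (a + d)%nat). lra. Qed.

Lemma S_diff_d beta a d x : Rabs (Sn beta (a + d) x - Sn beta a x) <= sqrt 2 * (Tn beta (a + d) - Tn beta a).
Proof. induction d.
  - rewrite Nat.add_0_r. unfold Rminus. rewrite !Rplus_opp_r, Rabs_R0. lra.
  - rewrite Nat.add_succ_r. unfold Sn, Tn in *. rewrite !sumR_S.
    replace (1 + (sumR (a + d) (fun j => beta (S j) * psi (S j) x) + beta (S (a + d)) * psi (S (a + d)) x) -
      (1 + sumR a (fun j => beta (S j) * psi (S j) x))) with
      ((1 + sumR (a + d) (fun j => beta (S j) * psi (S j) x) - (1 + sumR a (fun j => beta (S j) * psi (S j) x)))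
        + beta (S (a + d)) * psi (S (a + d)) x) by ring.
    eapply Rle_trans. apply Rabs_triang. rewrite Rabs_mult.
    pose proof (psi_bound (a + d) x). pose proof (Rabs_pos (beta (S (a + d)))).
    assert (Rabs (beta (S (a + d))) * Rabs (psi (S (a + d)) x) <= Rabs (beta (S (a + d))) * sqrt 2)
      by (apply Rmult_le_compat_l; auto). lra. Qed.

Lemma S_diff beta a b x : Rabs (Sn beta a x - Sn beta b x) <= sqrt 2 * Rabs (Tn beta a - Tn beta b).
Proof. destruct (Nat.le_ge_cases b a) as [H|H].
  - replace a with (b + (a - b))%nat by lia. pose proof (T_mono beta b (a - b)).
    rewrite (Rabs_right (Tn beta _ - Tn beta _)) by lra. apply S_diff_d.
  - replace b with (a + (b - a))%nat by lia. pose proof (T_mono beta a (b - a)).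
    rewrite Rabs_minus_sym, (Rabs_minus_sym (Tn beta a)). rewrite (Rabs_right (Tn beta _ - Tn beta _)) by lra. apply S_diff_d. Qed.

Lemma S_cauchy beta L x : Un_cv (Tn beta) L -> Cauchy_crit (fun n => Sn beta n x).
Proof. intros HL eps Heps.
  assert (Hs : 0 < sqrt 2) by (apply sqrt_lt_R0; lra).
  destruct (CV_Cauchy (Tn beta) (exist _ L HL) (eps / sqrt 2)) as [N HN].
  { apply Rdiv_lt_0_compat; auto. }
  exists N. intros n m Hn Hm. unfold Rdist.
  eapply Rle_lt_trans. apply S_diff. specialize (HN n m Hn Hm). unfold Rdist in HN.
  replace eps with (sqrt 2 * (eps / sqrt 2)) by (field; lra).
  apply Rmult_lt_compat_l; auto. Qed.

Definition qf beta L (HL : Un_cv (Tn beta) L) (x : R) : R :=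
  proj1_sig (R_complete _ (S_cauchy beta L x HL)).

Lemma qf_cv beta L HL x : Un_cv (fun n => Sn beta n x) (qf beta L HL x).
Proof. unfold qf. destruct R_complete; auto. Qed.

Lemma qf_close beta L HL x n : Rabs (qf beta L HL x - Sn beta n x) <= sqrt 2 * (L - Tn beta n).
Proof.
  assert (Hg := growing_ineq _ _ (T_growing beta) HL n).
  replace (L - Tn beta n) with (Rabs (L - Tn beta n)) by (rewrite Rabs_right; lra).
  apply Rle_cv_lim with (Un := fun k => Rabs (Sn beta k x - Sn beta n x)) (Vn := fun k => sqrt 2 * Rabs (Tn beta k - Tn beta n)).
  - intros k; apply S_diff.
  - apply cv_cvabs. apply CV_minus. apply qf_cv. intros e He; exists 0%nat; intros. unfold Rdist. rewrite Rminus_diag, Rabs_R0; lra.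
  - apply CV_mult. intros e He; exists 0%nat; intros. unfold Rdist. rewrite Rminus_diag, Rabs_R0; lra.
    apply cv_cvabs. apply CV_minus. auto. intros e He; exists 0%nat; intros. unfold Rdist. rewrite Rminus_diag, Rabs_R0; lra. Qed.

Lemma qf_bound beta L HL x : qf beta L HL x <= 1 + sqrt 2 * L.
Proof. pose proof (qf_close beta L HL x 0). unfold Sn, Tn in H; simpl in H.
  rewrite Rplus_0_r, Rminus_0_r in H. pose proof (Rle_abs (qf beta L HL x - 1)). lra. Qed.

Lemma cont_Sn beta n : continuity (Sn beta n).
Proof. unfold Sn. apply continuity_plus. apply continuity_const; intros x y; auto.
  apply (cont_sum n (fun j => psi (S j))). intros; apply cont_psi. Qed.

Lemma qf_cont beta L HL : continuity (qf beta L HL).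
Proof. intros y.
  assert (Hs : 0 < sqrt 2) by (apply sqrt_lt_R0; lra).
  apply (CVU_continuity (Sn beta) (qf beta L HL) y (mkposreal 1 Rlt_0_1)).
  - intros eps Heps. destruct (HL (eps / 2 / sqrt 2)) as [N HN].
    { apply Rdiv_lt_0_compat; lra. }
    exists N. intros n z Hn _. eapply Rle_lt_trans. apply qf_close.
    specialize (HN n Hn). unfold Rdist in HN. rewrite Rabs_minus_sym in HN.
    assert (Hg := growing_ineq _ _ (T_growing beta) HL n).
    rewrite Rabs_right in HN by lra.
    replace eps with (sqrt 2 * (eps / sqrt 2)) by (field; lra).
    apply Rmult_lt_compat_l; auto. unfold Rdiv in *. lra.
  - intros; apply cont_Sn.
  - unfold Boule. simpl. rewrite Rminus_diag, Rabs_R0. lra. Qed.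

Definition gfun m (v : nat -> R) x := sumR m (fun i => v i * psi (S i) x).

Lemma cont_g m v : continuity (gfun m v).
Proof. apply (cont_sum m (fun i => psi (S i))). intros; apply cont_psi. Qed.

Lemma sumR_mulr n f c : sumR n f * c = sumR n (fun i => f i * c).
Proof. induction n; simpl; [lra|]. rewrite <- IHn. ring. Qed.

Lemma gnorm m v : Int01 (fun x => gfun m v x * gfun m v x) = sumR m (fun i => v i * v i).
Proof.
  rewrite (Int01_ext _ (fun x => sumR m (fun i => v i * (fun i x => psi (S i) x * gfun m v x) i x))).
  2:{ intros x _. unfold gfun at 1. rewrite sumR_mulr. apply sumR_ext. intros; simpl; ring. }
  rewrite Int01_sum. 2:{ intros i. apply continuity_mult. apply cont_psi. apply cont_g. }
  apply sumR_ext. intros i Hi. f_equal.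
  rewrite (Int01_ext _ (fun x => sumR m (fun j => v j * (fun j x => psi (S i) x * psi (S j) x) j x))).
  2:{ intros x _. unfold gfun. rewrite <- sumR_scal. apply sumR_ext. intros; simpl; ring. }
  rewrite Int01_sum. 2:{ intros j. apply continuity_mult; apply cont_psi. }
  rewrite (sumR_ext m _ (fun j => v j * (if Nat.eqb i j then 1 else 0))).
  apply sumR_delta; auto. intros j _. rewrite orth. auto. Qed.

Lemma quad q (Hq : continuity q) m v :
  sumR m (fun i => v i * sumR m (fun j => covmat q i j * v j)) =
  Int01 (fun x => gfun m v x * gfun m v x * q x)
  - Int01 (fun x => gfun m v x * q x) * Int01 (fun x => gfun m v x * q x).
Proof.
  set (G := Int01 (fun x => gfun m v x * q x)).
  assert (HG : G = sumR m (fun j => v j * Expect q (psi (S j)))).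
  { unfold G, Expect.
    rewrite (Int01_ext _ (fun x => sumR m (fun j => v j * (fun j x => psi (S j) x * q x) j x))).
    2:{ intros x _. unfold gfun. rewrite sumR_mulr. apply sumR_ext. intros; simpl; ring. }
    apply Int01_sum. intros j. apply continuity_mult; [apply cont_psi|auto]. }
  assert (Hrow : forall i, sumR m (fun j => covmat q i j * v j) =
     Int01 (fun x => psi (S i) x * gfun m v x * q x) - Expect q (psi (S i)) * G).
  { intros i. unfold covmat.
    rewrite (sumR_ext m _ (fun j => v j * Expect q (fun x => psi (S i) x * psi (S j) x)
        - Expect q (psi (S i)) * (v j * Expect q (psi (S j))))) by (intros; ring).
    rewrite sumR_minus, sumR_scal, <- HG. f_equal. unfold Expect.
    rewrite (Int01_ext (fun x => psi (S i) x * gfun m v x * q x)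
       (fun x => sumR m (fun j => v j * (fun j x => psi (S i) x * psi (S j) x * q x) j x))).
    2:{ intros x _. unfold gfun. rewrite <- sumR_scal, sumR_mulr. apply sumR_ext. intros; simpl; ring. }
    rewrite Int01_sum. apply sumR_ext; auto.
    intros j. apply continuity_mult; [apply continuity_mult; apply cont_psi|auto]. }
  rewrite (sumR_ext m _ (fun i => v i * Int01 (fun x => psi (S i) x * gfun m v x * q x)
      - G * (v i * Expect q (psi (S i))))) by (intros i _; rewrite Hrow; ring).
  rewrite sumR_minus, sumR_scal, <- HG. f_equal.
  rewrite (Int01_ext (fun x => gfun m v x * gfun m v x * q x)
     (fun x => sumR m (fun i => v i * (fun i x => psi (S i) x * gfun m v x * q x) i x))).
  2:{ intros x _. unfold gfun at 1. rewrite !sumR_mulr. apply sumR_ext. intros; simpl; ring. }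
  symmetry. apply Int01_sum. intros i.
  apply continuity_mult; [apply continuity_mult; [apply cont_psi|apply cont_g]|auto]. Qed.

Theorem mainTheorem14 (gamma C : R) (beta : nat -> R) (p : R -> R)
  (hgamma : 1 / 2 < gamma) (hC : 0 < C)
  (hSob : forall n : nat,
      sumR n (fun j => (beta (S j))^2 * Rpower (INR (S j)) (2 * gamma)) <= C^2)
  (hp : forall x, 0 <= x <= 1 ->
      Un_cv (fun n => 1 + sumR n (fun j => beta (S j) * psi (S j) x)) (p x))
  (hpos : forall x, 0 <= x <= 1 -> 0 <= p x) :
  exists M : R, exists K : nat, forall k : nat, (K <= k)%nat ->
    forall lam, is_largest_eigenvalue (mk gamma k) (covmat p) lam -> lam <= M.
Proof.
  assert (Hub : has_ub (Tn beta)).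
  { exists ((C ^ 2 + (1 + / (2 * gamma - 1))) / 2). intros y [n ->].
    apply (beta_abs_bound gamma C beta hgamma hSob). }
  destruct (growing_cv _ (T_growing beta) Hub) as [L HL].
  set (q := qf beta L HL).
  assert (Hq : continuity q) by apply qf_cont.
  assert (Hpq : forall x, 0 <= x <= 1 -> p x = q x).
  { intros x Hx. apply (UL_sequence _ _ _ (hp x Hx)). apply (qf_cv beta L HL x). }
  assert (Hcov : forall i j, covmat p i j = covmat q i j).
  { intros i j. unfold covmat, Expect.
    rewrite !(Int01_ext (fun x => _ * p x) (fun x => _ * q x))
      by (intros x Hx; rewrite Hpq; auto). reflexivity. }
  exists (1 + sqrt 2 * L), 0%nat. intros k _ lam [[v [[i0 [Hi0 Hv]] Heig]] _].
  set (m := mk gamma k) in *.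
  assert (HS := sumR_pos m v i0 Hi0 Hv).
  assert (E1 : sumR m (fun i => v i * sumR m (fun j => covmat q i j * v j)) =
               lam * sumR m (fun i => v i * v i)).
  { rewrite <- sumR_scal. apply sumR_ext. intros i Hi.
    rewrite (sumR_ext m _ (fun j => covmat p i j * v j)) by (intros; rewrite Hcov; auto).
    rewrite Heig by auto. ring. }
  rewrite quad in E1 by auto.
  set (Mb := 1 + sqrt 2 * L) in *.
  assert (Hle : Int01 (fun x => gfun m v x * gfun m v x * q x) <=
                Int01 (fun x => Mb * (gfun m v x * gfun m v x))).
  { apply Int01_le.
    - apply continuity_mult; auto. apply continuity_mult; apply cont_g.
    - apply continuity_scal. apply continuity_mult; apply cont_g.
    - intros x _. assert (Hqx : q x <= Mb) by apply qf_bound.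
      assert (0 <= gfun m v x * gfun m v x) by nra. rewrite (Rmult_comm Mb). apply Rmult_le_compat_l; auto. }
  rewrite Int01_scal, gnorm in Hle by (apply continuity_mult; apply cont_g).
  assert (0 <= Int01 (fun x => gfun m v x * q x) * Int01 (fun x => gfun m v x * q x)) by nra.
  assert (lam * sumR m (fun i => v i * v i) <= Mb * sumR m (fun i => v i * v i)) by lra.
  apply Rmult_le_reg_r with (sumR m (fun i => v i * v i)); auto. Qed.
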